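(* For all $s,t\in\{1,2,3,\dots\}\cup\{\infty\}$, $\mathcal F(s,t)=\{\pi^{-1}:\pi\in\mathcal F(t,s)\}$.
   Context: Forkstack sorting with capacities $s,t\in\{1,2,3,\dots\}\cup\{\infty\}$: a permutation $\pi=\pi_1\cdots\pi_n$ of $\{1,\dots,n\}$ is placed on an input stack with $\pi_1$ on top; a working stack and an output stack are initially empty. A move either (i) removes the top $k$ elements of the input stack ($1\le k\le s$) and places them as a block, relative order unchanged, on top of the working stack, or (ii) removes the top $l$ elements of the working stack ($1\le l\le t$) and places them as a block, relative order unchanged, on top of the output stack. $\pi$ is sortable if some sequence of moves ends with input and working stacks empty and the output stack reading $1,2,\dots,n$ from top to bottom. $\mathcal F(s,t)$ is the set of all sortable permutations (of all lengths); $\pi^{-1}$ denotes the inverse permutation. *)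

(* Defs.v *)
From mathcomp Require Import all_boot all_fingroup.
Set Implicit Arguments. Unset Strict Implicit. Unset Printing Implicit Defensive.

Inductive cap := Fin of nat | Inf.

Definition valid_cap (c : cap) : bool :=
  match c with Fin k => 0 < k | Inf => true end.

Definition cap_le (k : nat) (c : cap) : bool :=
  match c with Fin m => k <= m | Inf => true end.

(* A configuration: (input stack, working stack, output stack); each stack is
   a sequence whose head is the top of the stack. *)
Definition config (T : Type) := (seq T * seq T * seq T)%type.

Inductive fs_move (T : Type) (s t : cap) : config T -> config T -> Prop :=
| move_in_work (inp w o : seq T) (k : nat) :
    0 < k -> cap_le k s -> k <= size inp ->
    fs_move s t (inp, w, o) (drop k inp, take k inp ++ w, o)
| move_work_out (inp w o : seq T) (l : nat) :
    0 < l -> cap_le l t -> l <= size w ->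
    fs_move s t (inp, w, o) (inp, drop l w, take l w ++ o).

Inductive fs_reach (T : Type) (s t : cap) : config T -> config T -> Prop :=
| reach_refl c : fs_reach s t c c
| reach_step c1 c2 c3 : fs_move s t c1 c2 -> fs_reach s t c2 c3 -> fs_reach s t c1 c3.

(* pi : 'S_n is sortable: pi_1 ... pi_n placed on the input stack with pi_1 on
   top; we must reach empty input and working stacks with output reading
   0,1,...,n-1 from top to bottom (values shifted by -1 w.r.t. the paper). *)
Definition sortable (s t : cap) (n : nat) (pi : 'S_n) : Prop :=
  fs_reach s t ([seq pi i | i <- enum 'I_n], [::], [::])
               ([::], [::], enum 'I_n).

(* Main.v *)
Require Import Defs.
From mathcomp Require Import all_boot all_fingroup.
Set Implicit Arguments. Unset Strict Implicit. Unset Printing Implicit Defensive.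

Definition cswap (T : Type) (x : config T) : config T :=
  let: (a, b, c) := x in (c, b, a).

Definition cmap (T U : Type) (g : T -> U) (x : config T) : config U :=
  let: (a, b, c) := x in (map g a, map g b, map g c).

Lemma reach_trans (T : Type) s t (c1 c2 c3 : config T) :
  fs_reach s t c1 c2 -> fs_reach s t c2 c3 -> fs_reach s t c1 c3.
Proof.
elim=> [c|x y z m _ IH] // H; exact: reach_step m (IH H).
Qed.

Lemma move_swap (T : Type) s t (c1 c2 : config T) :
  fs_move s t c1 c2 -> fs_move t s (cswap c2) (cswap c1).
Proof.
case=> inp w o k k0 kc ks /=.
- have Hs : size (take k inp) = k by rewrite size_take_min; apply/minn_idPl.
  have := @move_work_out T t s o (take k inp ++ w) (drop k inp) k k0 kc.
  rewrite size_cat Hs leq_addr => /(_ isT).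
  by rewrite drop_size_cat // take_size_cat // cat_take_drop.
- have Hs : size (take k w) = k by rewrite size_take_min; apply/minn_idPl.
  have := @move_in_work T t s (take k w ++ o) (drop k w) inp k k0 kc.
  rewrite size_cat Hs leq_addr => /(_ isT).
  by rewrite drop_size_cat // take_size_cat // cat_take_drop.
Qed.

Lemma reach_swap (T : Type) s t (c1 c2 : config T) :
  fs_reach s t c1 c2 -> fs_reach t s (cswap c2) (cswap c1).
Proof.
elim=> [c|x y z m _ IH]; first exact: reach_refl.
apply: reach_trans IH _; apply: reach_step (move_swap m) _; exact: reach_refl.
Qed.

Lemma move_map (T U : Type) (g : T -> U) s t (c1 c2 : config T) :
  fs_move s t c1 c2 -> fs_move s t (cmap g c1) (cmap g c2).
Proof.
case=> inp w o k k0 kc ks /=.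
- rewrite map_cat map_take map_drop; apply: move_in_work => //; by rewrite size_map.
- rewrite map_cat map_take map_drop; apply: move_work_out => //; by rewrite size_map.
Qed.

Lemma reach_map (T U : Type) (g : T -> U) s t (c1 c2 : config T) :
  fs_reach s t c1 c2 -> fs_reach s t (cmap g c1) (cmap g c2).
Proof.
elim=> [c|x y z m _ IH]; first exact: reach_refl.
exact: reach_step (move_map g m) IH.
Qed.

Lemma sortable_inv s t n (p : 'S_n) : sortable s t p -> sortable t s (p^-1)%g.
Proof.
rewrite /sortable => H.
have := reach_map (fun i => (p^-1)%g i) (reach_swap H).
rewrite /= -map_comp.
have -> : [seq ((fun i => (p^-1)%g i) \o p) i | i <- enum 'I_n] = enum 'I_n.
  by rewrite -[RHS]map_id; apply: eq_map => i /=; rewrite permK.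
by [].
Qed.

Theorem mainTheorem3 (s t : cap) (hs : valid_cap s) (ht : valid_cap t) :
  forall (n : nat) (sigma : 'S_n),
    sortable s t sigma <-> exists pi : 'S_n, sortable t s pi /\ sigma = (pi^-1)%g.
Proof.
move=> n sigma; split.
- move=> H; exists (sigma^-1)%g; split; first exact: sortable_inv.
  by rewrite invgK.
- by case=> pi [H ->]; apply: sortable_inv.
Qed.
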